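(* For an integer $d\geqslant 1$ and a real $x>0$, let $$W_d(x)=\sum_{\substack{n\geqslant 1\\ \lfloor x/n\rfloor-\lfloor x/(n+1)\rfloor=d}}\bigl\lvert \{x/(n+1)\}-\{x/n\}\bigr\rvert ,$$ and let $$f(d)=\frac{8d+2}3\sqrt{d+1}-\frac{8d-2}3\sqrt{d-1}-4\sqrt{d}.$$ Then for all integers $d>0$ and reals $x>0$, $$W_d(x)=f(d)\sqrt{x}+O(d),$$ with an absolute implied constant.
   Context: For a real number $t$, $\lfloor t\rfloor$ denotes its integer part and $\{t\}=t-\lfloor t\rfloor$ its fractional part. *)

(* Defs.v *)
From Stdlib Require Import Reals Lra ZArith.
Open Scope R_scope.

(* floor and fractional part: Stdlib's Int_part t = floor t, frac_part t = t - floor t *)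
Definition floorR (t : R) : Z := Int_part t.
Definition fracR (t : R) : R := frac_part t.

Definition W_term (d : nat) (x : R) (n : nat) : R :=
  if Z.eq_dec (floorR (x / INR n) - floorR (x / INR (S n)))%Z (Z.of_nat d)
  then Rabs (fracR (x / INR (S n)) - fracR (x / INR n))
  else 0.

(* For n > x both floors vanish, so (d >= 1) only n <= floor x + 1 can
   contribute; we sum n = 1 .. floor(x) + 1 (sum_f_R0 f N = f 0 + ... + f N). *)
Definition W (d : nat) (x : R) : R :=
  sum_f_R0 (fun k => W_term d x (S k)) (Z.to_nat (floorR x)).

Definition fconst (d : nat) : R :=
  (8 * INR d + 2) / 3 * sqrt (INR d + 1)
  - (8 * INR d - 2) / 3 * sqrt (INR d - 1)
  - 4 * sqrt (INR d).

(* Main.v *)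
Require Import Defs.
From Stdlib Require Import Reals Lra Lia Psatz ZArith.
From Coquelicot Require Coquelicot.
Set Bullet Behavior "Strict Subproofs".
Open Scope R_scope.


Definition cl (t : R) : R := Rmax (-1) (Rmin 1 t).
Definition hh (t : R) : R := Rabs (cl t) - cl t * cl t.

Lemma cl_bounds t : -1 <= cl t <= 1.
Proof. unfold cl, Rmax, Rmin; repeat destruct Rle_dec; lra. Qed.

Lemma cl_mono s t : s <= t -> cl s <= cl t.
Proof. intros; unfold cl, Rmax, Rmin; repeat destruct Rle_dec; lra. Qed.

Lemma cl_id t : -1 <= t <= 1 -> cl t = t.
Proof. intros; unfold cl, Rmax, Rmin; repeat destruct Rle_dec; lra. Qed.

Lemma hh_lip s t : Rabs (hh s - hh t) <= Rabs (cl s - cl t).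
Proof.
  unfold hh. pose proof (cl_bounds s); pose proof (cl_bounds t).
  set (a := cl s) in *; set (b := cl t) in *.
  unfold Rabs; repeat destruct Rcase_abs; nra.
Qed.

Lemma hh_range t : 0 <= hh t <= 1/4.
Proof.
  unfold hh. pose proof (cl_bounds t). set (a := cl t) in *.
  unfold Rabs; destruct Rcase_abs; split; try nra.
  - pose proof (pow2_ge_0 (a + 1/2)); simpl in *; nra.
  - pose proof (pow2_ge_0 (a - 1/2)); simpl in *; nra.
Qed.

Lemma mul_bound a s : 0 <= a -> Rabs s <= 1 -> Rabs (a * s) <= a.
Proof. intros. rewrite Rabs_mult, (Rabs_right a) by lra.
  assert (a * Rabs s <= a * 1) by (apply Rmult_le_compat_l; lra). lra. Qed.

Lemma abel_G (w S : nat -> R) N : (forall n, w (Datatypes.S n) <= w n) ->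
  (forall n, Rabs (S n) <= 1) ->
  Rabs (sum_f_R0 (fun k => (w k - w (Datatypes.S k)) * S k) N) <= w 0%nat - w (Datatypes.S N).
Proof.
  intros Hw HS. induction N as [|N IH]; simpl.
  - apply mul_bound; [specialize (Hw 0%nat); lra | apply HS].
  - eapply Rle_trans; [apply Rabs_triang|].
    pose proof (mul_bound (w (Datatypes.S N) - w (Datatypes.S (Datatypes.S N))) (S (Datatypes.S N))).
    specialize (Hw (Datatypes.S N)). specialize (HS (Datatypes.S N)). 
    assert (Rabs ((w (Datatypes.S N) - w (Datatypes.S (Datatypes.S N))) * S (Datatypes.S N)) <= w (Datatypes.S N) - w (Datatypes.S (Datatypes.S N))) by (apply H; lra).
    lra.
Qed.

Lemma abel_id (w r : nat -> R) N :
  sum_f_R0 (fun k => w k * r k) N =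
  w (S N) * sum_f_R0 r N + sum_f_R0 (fun k => (w k - w (S k)) * sum_f_R0 r k) N.
Proof.
  induction N as [|N IH]; simpl; [ring|]. rewrite IH. simpl. ring.
Qed.

Lemma abel (w r : nat -> R) N : (forall n, w (S n) <= w n) ->
  (forall n, Rabs (w n) <= 1) -> (forall n, Rabs (sum_f_R0 r n) <= 1) ->
  Rabs (sum_f_R0 (fun k => w k * r k) N) <= 3.
Proof.
  intros Hw Hb Hr. rewrite abel_id.
  eapply Rle_trans; [apply Rabs_triang|].
  pose proof (abel_G w (fun k => sum_f_R0 r k) N Hw Hr).
  rewrite Rabs_mult.
  pose proof (Hb (S N)); pose proof (Hb 0%nat); pose proof (Hr N).
  pose proof (Rabs_pos (w (S N))). pose proof (Rabs_pos (sum_f_R0 r N)).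
  assert (Rabs (w (S N)) * Rabs (sum_f_R0 r N) <= 1 * 1) by (apply Rmult_le_compat; lra).
  pose proof (Rle_abs (w 0%nat)). pose proof (Rle_abs (- w (S N))). rewrite Rabs_Ropp in *.
  lra.
Qed.

Definition I1 (t : R) : R := if Rle_dec 1 t then 1 else 0.
Definition I2 (t : R) : R := if Rle_dec t (-1) then 1 else 0.

Lemma key (d : nat) (a b : R) :
  (if Z.eq_dec (Int_part a - Int_part b)%Z (Z.of_nat d)
   then Rabs (frac_part b - frac_part a) else 0)
  = hh (a - b - INR d) + (cl (a - b - INR d) - I1 (a - b - INR d) + I2 (a - b - INR d))
      * (a - b - IZR (Int_part a - Int_part b)).
Proof.
  pose proof (base_Int_part a) as [Ha1 Ha2]. pose proof (base_Int_part b) as [Hb1 Hb2].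
  assert (Hfr : frac_part b - frac_part a = IZR (Int_part a - Int_part b) - (a - b)).
  { unfold frac_part. rewrite minus_IZR. ring. }
  rewrite Hfr. rewrite minus_IZR.
  set (t := a - b - INR d).
  assert (HD : INR d = IZR (Z.of_nat d)) by apply INR_IZR_INZ.
  set (e := (Int_part a - Int_part b - Z.of_nat d)%Z).
  assert (He : IZR e = IZR (Int_part a) - IZR (Int_part b) - INR d)
    by (unfold e; rewrite !minus_IZR, HD; ring).
  assert (Hlo : t - 1 < IZR e) by (unfold t; lra).
  assert (Hhi : IZR e < t + 1) by (unfold t; lra).
  unfold hh, I1, I2.
  destruct Z.eq_dec as [Heq|Hne].
  - assert (e = 0%Z) by (unfold e; lia).
    assert (IZR e = 0) by (rewrite H; reflexivity).
    assert (Ht : -1 < t < 1) by lra.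
    rewrite cl_id by lra.
    destruct Rle_dec; [lra|]. destruct Rle_dec; [lra|].
    replace (IZR (Int_part a) - IZR (Int_part b) - (a - b)) with (IZR e - t) by (rewrite He; unfold t; ring).
    replace (a - b - (IZR (Int_part a) - IZR (Int_part b))) with (t - IZR e) by (rewrite He; unfold t; ring).
    rewrite H0. unfold Rabs; repeat destruct Rcase_abs; nra.
  - assert (Hne' : e <> 0%Z) by (unfold e; lia).
    replace (a - b - (IZR (Int_part a) - IZR (Int_part b))) with (t - IZR e) by (rewrite He; unfold t; ring).
    destruct (Rle_dec 1 t).
    + unfold cl. unfold Rmin, Rmax. repeat destruct Rle_dec; try lra.
      all: try (replace t with 1 by lra); rewrite ?Rabs_R1; ring.
    + destruct (Rle_dec t (-1)).
      * unfold cl. unfold Rmin, Rmax. repeat destruct Rle_dec; try lra.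
        all: try (replace t with (-1) by lra); unfold Rabs; repeat destruct Rcase_abs; try lra; ring.
      * rewrite cl_id by lra.
        assert (Hl : (-2 < e)%Z) by (apply lt_IZR; simpl; lra).
        assert (Hh : (e < 2)%Z) by (apply lt_IZR; simpl; lra).
        assert (e = 1%Z \/ e = (-1)%Z) as [E|E] by lia; rewrite E in *; simpl in *.
        -- rewrite Rabs_right by lra. ring.
        -- rewrite Rabs_left by lra. ring.
Qed.

Definition aa (x : R) (n : nat) := x / INR n.
Definition tt (d : nat) (x : R) (n : nat) := aa x n - aa x (S n) - INR d.
Definition rr (x : R) (n : nat) :=
  aa x n - aa x (S n) - IZR (Int_part (aa x n) - Int_part (aa x (S n))).

Lemma term_eq d x n : W_term d x n =
  hh (tt d x n) + (cl (tt d x n) - I1 (tt d x n) + I2 (tt d x n)) * rr x n.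
Proof. unfold W_term, floorR, fracR, tt, rr, aa. apply key. Qed.

Lemma delta_eq x k : aa x (S k) - aa x (S (S k)) = x / ((INR k + 1) * (INR k + 2)).
Proof.
  unfold aa. rewrite !S_INR. pose proof (pos_INR k). field. split; lra.
Qed.

Lemma tt_mono d x k : 0 < x -> tt d x (S (S k)) <= tt d x (S k).
Proof.
  intros Hx. unfold tt. pose proof (delta_eq x k) as E1. pose proof (delta_eq x (S k)) as E2.
  rewrite S_INR in E2. pose proof (pos_INR k).
  assert (x / ((INR k + 1 + 1) * (INR k + 1 + 2)) <= x / ((INR k + 1) * (INR k + 2))).
  { unfold Rdiv. apply Rmult_le_compat_l; [lra|]. apply Rinv_le_contravar; nra. }
  lra.
Qed.

Lemma rr_sum x N : sum_f_R0 (fun k => rr x (S k)) N = frac_part (aa x 1) - frac_part (aa x (S (S N))).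
Proof.
  induction N as [|N IH]; simpl sum_f_R0.
  - unfold rr, frac_part. rewrite minus_IZR. ring.
  - rewrite IH. unfold rr, frac_part. rewrite minus_IZR. ring.
Qed.

Lemma frac_range r : 0 <= frac_part r < 1.
Proof. pose proof (base_Int_part r). unfold frac_part. lra. Qed.

Lemma rr_sum_bound x N : Rabs (sum_f_R0 (fun k => rr x (S k)) N) <= 1.
Proof.
  rewrite rr_sum. pose proof (frac_range (aa x 1)). pose proof (frac_range (aa x (S (S N)))).
  unfold Rabs; destruct Rcase_abs; lra.
Qed.

Lemma I1_mono s t : s <= t -> I1 s <= I1 t.
Proof. intros; unfold I1; repeat destruct Rle_dec; lra. Qed.
Lemma I2_mono s t : s <= t -> I2 t <= I2 s.
Proof. intros; unfold I2; repeat destruct Rle_dec; lra. Qed.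
Lemma I1_b t : Rabs (I1 t) <= 1.
Proof. unfold I1; destruct Rle_dec; unfold Rabs; destruct Rcase_abs; lra. Qed.
Lemma I2_b t : Rabs (- I2 t) <= 1.
Proof. unfold I2; destruct Rle_dec; unfold Rabs; destruct Rcase_abs; lra. Qed.
Lemma cl_b t : Rabs (cl t) <= 1.
Proof. pose proof (cl_bounds t). unfold Rabs; destruct Rcase_abs; lra. Qed.

Lemma part1 d x M : 0 < x ->
  Rabs (sum_f_R0 (fun k => W_term d x (S k)) M - sum_f_R0 (fun k => hh (tt d x (S k))) M) <= 9.
Proof.
  intros Hx.
  assert (E : sum_f_R0 (fun k => W_term d x (S k)) M - sum_f_R0 (fun k => hh (tt d x (S k))) M
    = sum_f_R0 (fun k => cl (tt d x (S k)) * rr x (S k)) M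
      - sum_f_R0 (fun k => I1 (tt d x (S k)) * rr x (S k)) M
      - sum_f_R0 (fun k => (- I2 (tt d x (S k))) * rr x (S k)) M).
  { induction M as [|M IH]; simpl sum_f_R0; rewrite ?term_eq; [ring|].
    set (u := tt d x (S (S M))) in *.
    assert (Hs : (cl u - I1 u + I2 u) * rr x (S (S M)) = cl u * rr x (S (S M)) - I1 u * rr x (S (S M)) - (- I2 u) * rr x (S (S M))) by ring.
    lra. }
  rewrite E.
  pose proof (abel (fun k => cl (tt d x (S k))) (fun k => rr x (S k)) M) as A1.
  pose proof (abel (fun k => I1 (tt d x (S k))) (fun k => rr x (S k)) M) as A2.
  pose proof (abel (fun k => - I2 (tt d x (S k))) (fun k => rr x (S k)) M) as A3.
  simpl in A1, A2, A3.
  assert (B1 := A1 (fun n => cl_mono _ _ (tt_mono d x n Hx)) (fun n => cl_b _) (rr_sum_bound x)).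
  assert (B2 := A2 (fun n => I1_mono _ _ (tt_mono d x n Hx)) (fun n => I1_b _) (rr_sum_bound x)).
  assert (B3 : Rabs (sum_f_R0 (fun k => - I2 (tt d x (S k)) * rr x (S k)) M) <= 3).
  { apply A3; [|intros; apply I2_b|apply rr_sum_bound].
    intros n. pose proof (I2_mono _ _ (tt_mono d x n Hx)). lra. }
  eapply Rle_trans; [apply Rabs_triang|]. rewrite Rabs_Ropp.
  eapply Rle_trans; [apply Rplus_le_compat_r; apply Rabs_triang|]. rewrite Rabs_Ropp. lra.
Qed.

Definition qq (x u : R) := x / (u * u).
Definition kf (d : nat) (x u : R) := hh (qq x u - INR d).
Definition AA (d : nat) (x u : R) :=
  - (1 + 2 * INR d) * x / u + x * x / (3 * (u * u * u)) - (INR d + INR d * INR d) * u.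
Definition BB (d : nat) (x u : R) :=
  - (2 * INR d - 1) * x / u + x * x / (3 * (u * u * u)) + (INR d - INR d * INR d) * u.
Definition AA' (d : nat) (x u : R) := (qq x u - INR d) - (qq x u - INR d) * (qq x u - INR d).
Definition BB' (d : nat) (x u : R) := (INR d - qq x u) - (qq x u - INR d) * (qq x u - INR d).

Module DerivM.
Import Coquelicot.Coquelicot.
Lemma dA d x u : 0 < u -> derivable_pt_lim (AA d x) u (AA' d x u).
Proof.
  intros Hu. apply is_derive_Reals. unfold AA, AA', qq. auto_derive.
  - assert (0 < u * u * u) by (apply Rmult_lt_0_compat; nra). repeat split; lra.
  - field. lra.
Qed.

Lemma dB d x u : 0 < u -> derivable_pt_lim (BB d x) u (BB' d x u).
Proof.
  intros Hu. apply is_derive_Reals. unfold BB, BB', qq. auto_derive.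
  - assert (0 < u * u * u) by (apply Rmult_lt_0_compat; nra). repeat split; lra.
  - field. lra.
Qed.

End DerivM.
Import DerivM.


Section S.
Variable d : nat.
Variable x : R.
Hypothesis Hd : (1 <= d)%nat.
Hypothesis Hx : 0 < x.

Definition u1 := sqrt (x / (INR d + 1)).
Definition u2 := sqrt (x / INR d).
Definition u3 := sqrt (x / (INR d - 1)).

Definition PP (u : R) : R :=
  if Rle_dec u u1 then 0
  else if Rle_dec u u2 then AA d x u - AA d x u1
  else if le_dec 2 d then
    (if Rle_dec u3 u then AA d x u2 - AA d x u1 + BB d x u3 - BB d x u2
     else AA d x u2 - AA d x u1 + BB d x u - BB d x u2)
  else AA d x u2 - AA d x u1 + BB d x u - BB d x u2.

Definition Good (a b : R) := forall m M, (forall u, a <= u <= b -> m <= kf d x u <= M) ->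
  m * (b - a) <= PP b - PP a <= M * (b - a).

Lemma Good_glue a c b : a <= c <= b -> Good a c -> Good c b -> Good a b.
Proof.
  intros H G1 G2 m M Hk.
  assert (A1 := G1 m M (fun u Hu => Hk u ltac:(lra))).
  assert (A2 := G2 m M (fun u Hu => Hk u ltac:(lra))). nra.
Qed.

Lemma Good_piece (F F' : R -> R) cst a b : 0 < a <= b ->
  (forall u, a <= u <= b -> derivable_pt_lim F u (F' u)) ->
  (forall u, a <= u <= b -> F' u = kf d x u) ->
  (forall u, a <= u <= b -> PP u = F u + cst) -> Good a b.
Proof.
  intros Hab HD HF HP m M Hk. destruct (Req_dec a b) as [E|E].
  - subst. rewrite Rminus_diag. nra.
  - destruct (MVT_cor2 F F' a b ltac:(lra) HD) as [c [Hc Hc2]].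
    rewrite (HP b ltac:(lra)), (HP a ltac:(lra)).
    replace (F b + cst - (F a + cst)) with (F b - F a) by ring. rewrite Hc.
    rewrite HF by lra. destruct (Hk c ltac:(lra)). split; apply Rmult_le_compat_r; lra.
Qed.

Lemma Good_const a b : a <= b -> (forall u, a <= u <= b -> kf d x u = 0) -> PP b = PP a -> Good a b.
Proof.
  intros Hab Hk HP m M H. rewrite HP, Rminus_diag. destruct (H a ltac:(lra)).
  rewrite (Hk a ltac:(lra)) in *. split; apply Rmult_le_0_compat || idtac; nra.
Qed.

Lemma ge_div c v y : 0 < v -> c * v <= y -> c <= y / v.
Proof. intros. apply (Rmult_le_reg_r v); [lra|]. unfold Rdiv. rewrite Rmult_assoc, Rinv_l; lra. Qed.
Lemma le_div c v y : 0 < v -> y <= c * v -> y / v <= c.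
Proof. intros. apply (Rmult_le_reg_r v); [lra|]. unfold Rdiv. rewrite Rmult_assoc, Rinv_l; lra. Qed.

Lemma INRd1 : 1 <= INR d.
Proof. apply (le_INR 1); lia. Qed.

Lemma sq_u1 : u1 * u1 = x / (INR d + 1).
Proof. unfold u1. apply sqrt_sqrt. pose proof INRd1. apply Rlt_le, Rdiv_lt_0_compat; lra. Qed.
Lemma sq_u2 : u2 * u2 = x / INR d.
Proof. unfold u2. apply sqrt_sqrt. pose proof INRd1. apply Rlt_le, Rdiv_lt_0_compat; lra. Qed.
Lemma sq_u3 : (2 <= d)%nat -> u3 * u3 = x / (INR d - 1).
Proof. intros. unfold u3. apply sqrt_sqrt. assert (2 <= INR d) by (apply (le_INR 2); lia).
  apply Rlt_le, Rdiv_lt_0_compat; lra. Qed.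

Lemma pos_u1 : 0 < u1.
Proof. unfold u1. apply sqrt_lt_R0. pose proof INRd1. apply Rdiv_lt_0_compat; lra. Qed.
Lemma u12 : u1 <= u2.
Proof. unfold u1, u2. apply sqrt_le_1_alt. pose proof INRd1. unfold Rdiv.
  apply Rmult_le_compat_l; [lra|]. apply Rinv_le_contravar; lra. Qed.
Lemma u23 : (2 <= d)%nat -> u2 <= u3.
Proof. intros. unfold u3, u2. apply sqrt_le_1_alt. assert (2 <= INR d) by (apply (le_INR 2); lia). unfold Rdiv.
  apply Rmult_le_compat_l; [lra|]. apply Rinv_le_contravar; lra. Qed.

Lemma q_ge u c : 0 < u -> 0 < c -> u * u <= x / c -> c <= qq x u.
Proof. intros Hu Hc H. unfold qq. apply ge_div; [nra|].
  apply (Rmult_le_compat_l c) in H; [|lra]. replace (c * (x / c)) with x in H by (field; lra). lra. Qed.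
Lemma q_le u c : 0 < u -> 0 < c -> x / c <= u * u -> qq x u <= c.
Proof. intros Hu Hc H. unfold qq. apply le_div; [nra|].
  apply (Rmult_le_compat_l c) in H; [|lra]. replace (c * (x / c)) with x in H by (field; lra). lra. Qed.

Lemma sq_mono a b : 0 <= a <= b -> a * a <= b * b.
Proof. intros; nra. Qed.

Lemma kf_R0 u : 0 < u <= u1 -> kf d x u = 0.
Proof.
  intros Hu. pose proof INRd1. assert (INR d + 1 <= qq x u).
  { apply q_ge; try lra. rewrite <- sq_u1. apply sq_mono; lra. }
  unfold kf, hh. unfold cl at 1 2 3. unfold Rmin, Rmax. repeat destruct Rle_dec; try lra.
  all: try (rewrite Rabs_R1; ring).
  all: replace (qq x u - INR d) with 1 by lra; rewrite Rabs_R1; ring.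
Qed.

Lemma kf_R1 u : u1 <= u <= u2 -> kf d x u = AA' d x u.
Proof.
  intros Hu. pose proof INRd1. pose proof pos_u1.
  assert (INR d <= qq x u).
  { apply q_ge; try lra. rewrite <- sq_u2. apply sq_mono; lra. }
  assert (qq x u <= INR d + 1).
  { apply q_le; try lra. rewrite <- sq_u1. apply sq_mono; lra. }
  unfold kf, hh, AA'. rewrite cl_id by lra. rewrite Rabs_right by lra. ring.
Qed.

Lemma kf_R2 u : u2 <= u -> ((2 <= d)%nat -> u <= u3) -> kf d x u = BB' d x u.
Proof.
  intros Hu Hu3. pose proof INRd1. pose proof pos_u1. pose proof u12.
  assert (qq x u <= INR d).
  { apply q_le; try lra. rewrite <- sq_u2. apply sq_mono; lra. }
  assert (INR d - 1 <= qq x u).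
  { destruct (le_dec 2 d) as [G2|G2].
    - assert (2 <= INR d) by (apply (le_INR 2); lia).
      apply q_ge; try lra. rewrite <- sq_u3 by lia. pose proof (u23 G2). apply sq_mono; specialize (Hu3 G2); lra.
    - assert (d = 1%nat) by lia. rewrite H3. simpl. unfold qq.
      assert (0 < x / (u * u)) by (apply Rdiv_lt_0_compat; nra). lra. }
  unfold kf, hh, BB'. rewrite cl_id by lra. rewrite Rabs_left1 by lra. ring.
Qed.

Lemma kf_R3 u : (2 <= d)%nat -> u3 <= u -> kf d x u = 0.
Proof.
  intros H2 Hu. assert (2 <= INR d) by (apply (le_INR 2); lia). pose proof pos_u1. pose proof u12. pose proof (u23 H2).
  assert (qq x u <= INR d - 1).
  { apply q_le; try lra. rewrite <- sq_u3 by lia. apply sq_mono; lra. }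
  unfold kf, hh. unfold cl at 1 2 3. unfold Rmin, Rmax. repeat destruct Rle_dec; try lra.
  all: try (replace (qq x u - INR d) with (-1) by lra); unfold Rabs; destruct Rcase_abs; lra.
Qed.


Lemma u12s : u1 < u2.
Proof. unfold u1, u2. apply sqrt_lt_1_alt. pose proof INRd1. split.
  - apply Rlt_le, Rdiv_lt_0_compat; lra.
  - unfold Rdiv. apply Rmult_lt_compat_l; [lra|]. apply Rinv_lt_contravar; nra. Qed.
Lemma u23s : (2 <= d)%nat -> u2 < u3.
Proof. intros. unfold u3, u2. apply sqrt_lt_1_alt. assert (2 <= INR d) by (apply (le_INR 2); lia). split.
  - apply Rlt_le, Rdiv_lt_0_compat; lra.
  - unfold Rdiv. apply Rmult_lt_compat_l; [lra|]. apply Rinv_lt_contravar; nra. Qed.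

Lemma PP_R0 u : u <= u1 -> PP u = 0.
Proof. intros; unfold PP; destruct Rle_dec; lra. Qed.
Lemma PP_R1 u : u1 <= u <= u2 -> PP u = AA d x u - AA d x u1.
Proof. intros; unfold PP. destruct Rle_dec. { replace u with u1 by lra. ring. }
  destruct Rle_dec; lra. Qed.
Lemma PP_R2 u : u2 <= u -> ((2 <= d)%nat -> u <= u3) -> PP u = AA d x u2 - AA d x u1 + BB d x u - BB d x u2.
Proof. intros. pose proof u12s. unfold PP. destruct Rle_dec; [lra|].
  destruct Rle_dec. { replace u with u2 by lra. ring. }
  destruct le_dec; [|reflexivity]. destruct Rle_dec; [|reflexivity].
  replace u with u3 by (specialize (H0 l); lra). reflexivity. Qed.
Lemma PP_R3 u : (2 <= d)%nat -> u3 <= u -> PP u = AA d x u2 - AA d x u1 + BB d x u3 - BB d x u2.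
Proof. intros. pose proof u12s. pose proof (u23s H). unfold PP. destruct Rle_dec; [lra|].
  destruct Rle_dec; [lra|]. destruct le_dec; [|lia]. destruct Rle_dec; [reflexivity|lra]. Qed.

Lemma G0 a b : 0 < a <= b -> b <= u1 -> Good a b.
Proof. intros. apply Good_const; [lra| |].
  - intros; apply kf_R0; lra.
  - rewrite !PP_R0; lra. Qed.
Lemma G1 a b : u1 <= a <= b -> b <= u2 -> Good a b.
Proof. intros. pose proof pos_u1. apply (Good_piece (AA d x) (AA' d x) (- AA d x u1)); [lra| | |].
  - intros; apply dA; lra.
  - intros; symmetry; apply kf_R1; lra.
  - intros; rewrite PP_R1; [ring|lra]. Qed.
Lemma G2 a b : u2 <= a <= b -> ((2 <= d)%nat -> b <= u3) -> Good a b.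
Proof. intros. pose proof pos_u1. pose proof u12. apply (Good_piece (BB d x) (BB' d x) (AA d x u2 - AA d x u1 - BB d x u2)); [lra| | |].
  - intros; apply dB; lra.
  - intros; symmetry; apply kf_R2; [lra|]. intros G; specialize (H0 G); lra.
  - intros; rewrite PP_R2; [ring|lra|]. intros G; specialize (H0 G); lra. Qed.
Lemma G3 a b : (2 <= d)%nat -> u3 <= a <= b -> Good a b.
Proof. intros. apply Good_const; [lra| |].
  - intros; apply kf_R3; auto; lra.
  - rewrite !PP_R3; auto; lra. Qed.

Lemma Gup1 a b : 0 < a <= b -> b <= u2 -> Good a b.
Proof. intros. destruct (Rle_dec b u1). { apply G0; lra. }
  destruct (Rle_dec u1 a). { apply G1; lra. }
  apply (Good_glue a u1 b); [lra| apply G0; lra| apply G1; lra]. Qed.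

Lemma Gall a b : 0 < a <= b -> Good a b.
Proof. intros. pose proof u12. pose proof pos_u1. destruct (le_dec 2 d) as [D2|D2].
  - pose proof (u23 D2).
    assert (Gup2 : forall a b, 0 < a <= b -> b <= u3 -> Good a b).
    { intros a' b' ? ?. destruct (Rle_dec b' u2). { apply Gup1; lra. }
      destruct (Rle_dec u2 a'). { apply G2; [lra|intros; lra]. }
      apply (Good_glue a' u2 b'); [lra| apply Gup1; lra| apply G2; [lra|intros; lra]]. }
    destruct (Rle_dec b u3). { apply Gup2; lra. }
    destruct (Rle_dec u3 a). { apply G3; auto; lra. }
    apply (Good_glue a u3 b); [lra| apply Gup2; lra| apply G3; auto; lra].
  - destruct (Rle_dec b u2). { apply Gup1; lra. }
    destruct (Rle_dec u2 a). { apply G2; [lra|intros; lia]. }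
    apply (Good_glue a u2 b); [lra| apply Gup1; lra| apply G2; [lra|intros; lia]].
Qed.

End S.

Lemma qq_anti x u v : 0 < x -> 0 < u <= v -> qq x v <= qq x u.
Proof. intros. unfold qq, Rdiv. apply Rmult_le_compat_l; [lra|]. apply Rinv_le_contravar; nra. Qed.

Definition Dl d x (u : R) := cl (qq x u - INR d) - cl (qq x (u + 1) - INR d).

Lemma step d x k : (1 <= d)%nat -> 0 < x ->
  Rabs (hh (tt d x (S k)) - (PP d x (INR k + 2) - PP d x (INR k + 1))) <= Dl d x (INR k + 1).
Proof.
  intros Hd Hx. pose proof (pos_INR k).
  set (n := INR k + 1).
  assert (Hdel : tt d x (S k) = x / ((INR k + 1) * (INR k + 2)) - INR d)
    by (unfold tt; rewrite delta_eq; ring).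
  assert (Hq1 : qq x (n + 1) <= x / ((INR k + 1) * (INR k + 2))).
  { unfold qq, n, Rdiv. apply Rmult_le_compat_l; [lra|]. apply Rinv_le_contravar; nra. }
  assert (Hq2 : x / ((INR k + 1) * (INR k + 2)) <= qq x n).
  { unfold qq, n, Rdiv. apply Rmult_le_compat_l; [lra|]. apply Rinv_le_contravar; nra. }
  set (t := tt d x (S k)) in *.
  set (D := Dl d x n).
  assert (Hct : cl (qq x (n+1) - INR d) <= cl t <= cl (qq x n - INR d)).
  { split; apply cl_mono; lra. }
  assert (G := Gall d x Hd Hx n (INR k + 2) ltac:(unfold n; lra) (hh t - D) (hh t + D)).
  replace (INR k + 2 - n) with 1 in G by (unfold n; ring).
  assert (Hk : forall u, n <= u <= INR k + 2 -> hh t - D <= kf d x u <= hh t + D).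
  { intros u Hu. unfold kf.
    assert (qq x (n+1) <= qq x u <= qq x n) by (split; apply qq_anti; unfold n in *; lra).
    assert (cl (qq x (n+1) - INR d) <= cl (qq x u - INR d) <= cl (qq x n - INR d)) by (split; apply cl_mono; lra).
    pose proof (hh_lip (qq x u - INR d) t).
    unfold D, Dl. unfold Rabs in *; repeat destruct Rcase_abs; lra. }
  specialize (G Hk). unfold Rabs; destruct Rcase_abs; lra.
Qed.

Lemma Dl_sum d x M : sum_f_R0 (fun k => Dl d x (INR k + 1)) M
  = cl (qq x 1 - INR d) - cl (qq x (INR M + 2) - INR d).
Proof.
  induction M as [|M IH]; cbn [sum_f_R0].
  - unfold Dl. simpl. replace (0 + 1) with 1 by ring. replace (1 + 1) with (0 + 2) by ring. reflexivity.
  - rewrite IH. unfold Dl. rewrite S_INR.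
    replace (INR M + 1 + 1) with (INR M + 2) by ring.
    replace (INR M + 2 + 1) with (INR M + 1 + 2) by ring. ring.
Qed.

Lemma part2 d x M : (1 <= d)%nat -> 0 < x ->
  Rabs (sum_f_R0 (fun k => hh (tt d x (S k))) M - (PP d x (INR M + 2) - PP d x 1)) <= 2.
Proof.
  intros Hd Hx.
  assert (H : Rabs (sum_f_R0 (fun k => hh (tt d x (S k))) M - (PP d x (INR M + 2) - PP d x 1))
     <= sum_f_R0 (fun k => Dl d x (INR k + 1)) M).
  { induction M as [|M IH]; cbn [sum_f_R0].
    - pose proof (step d x 0 Hd Hx). simpl in H. replace (0 + 1) with 1 in H by ring. simpl INR. replace (0+1) with 1 by ring. exact H.
    - pose proof (step d x (S M) Hd Hx) as St. rewrite S_INR in *.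
      replace (INR M + 1 + 1) with (INR M + 2) in St by ring.
      replace (INR M + 1 + 2) with (INR (S M) + 2) in * by (rewrite S_INR; ring).
      rewrite S_INR in *. replace (INR M + 1 + 1) with (INR M + 2) by ring.
      eapply Rle_trans; [|apply Rplus_le_compat; [exact IH| exact St]].
      eapply Rle_trans; [|apply Rabs_triang]. right. f_equal. ring. }
  rewrite Dl_sum in H. pose proof (cl_bounds (qq x 1 - INR d)). pose proof (cl_bounds (qq x (INR M + 2) - INR d)). lra.
Qed.

Lemma AA_val d x sx s : 0 < sx -> 0 < s -> sx * sx = x -> s * s = INR d + 1 ->
  AA d x (sx / s) = - sx * s * (8 * INR d + 2) / 3.
Proof. intros. unfold AA. replace (INR d) with (s * s - 1) by lra. subst x. field. lra. Qed.

Lemma AB2_val d x sx s : 0 < sx -> 0 < s -> sx * sx = x -> s * s = INR d ->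
  AA d x (sx / s) - BB d x (sx / s) = - 4 * sx * s.
Proof. intros. unfold AA, BB. replace (INR d) with (s * s) by lra. subst x. field. lra. Qed.

Lemma BB_val d x sx s : 0 < sx -> 0 < s -> sx * sx = x -> s * s = INR d - 1 ->
  BB d x (sx / s) = - sx * s * (8 * INR d - 2) / 3.
Proof. intros. unfold BB. replace (INR d) with (s * s + 1) by lra. subst x. field. lra. Qed.

Lemma BB1_bound x y : 0 < x -> x + 1 <= y -> Rabs (BB 1 x y) <= 2.
Proof.
  intros Hx Hy. unfold BB. simpl INR.
  set (r := x / y). set (iy := / y).
  assert (Hr : 0 < r < 1).
  { unfold r. split. apply Rdiv_lt_0_compat; lra.
    apply (Rmult_lt_reg_r y); [lra|]. unfold Rdiv. rewrite Rmult_assoc, Rinv_l; lra. }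
  assert (Hiy : 0 < iy <= 1).
  { unfold iy. split. apply Rinv_0_lt_compat; lra. rewrite <- Rinv_1. apply Rinv_le_contravar; lra. }
  replace (- (2 * 1 - 1) * x / y + x * x / (3 * (y * y * y)) + (1 - 1 * 1) * y)
    with (- r + r * r * iy / 3) by (unfold r, iy; field; lra).
  assert (0 <= r * r * iy <= 1) by (split; [apply Rmult_le_pos; nra | nra]).
  unfold Rabs; destruct Rcase_abs; lra.
Qed.

Lemma PP1_bound d x : (1 <= d)%nat -> 0 < x -> 0 <= PP d x 1 <= 1/4.
Proof.
  intros Hd Hx. pose proof (pos_u1 d x Hd Hx) as Hp.
  set (a := Rmin 1 (u1 d x)).
  assert (Ha : 0 < a <= 1) by (unfold a, Rmin; destruct Rle_dec; lra).
  assert (HPa : PP d x a = 0) by (apply PP_R0; unfold a, Rmin; destruct Rle_dec; lra).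
  pose proof (Gall d x Hd Hx a 1 Ha 0 (1/4) (fun u _ => hh_range _)) as G.
  rewrite HPa in G. lra.
Qed.

Lemma Pinf_val d x : (1 <= d)%nat -> 0 < x ->
  AA d x (u2 d x) - AA d x (u1 d x)
  + (if le_dec 2 d then BB d x (u3 d x) else 0) - BB d x (u2 d x) = fconst d * sqrt x.
Proof.
  intros Hd Hx. pose proof (INRd1 d Hd).
  assert (Hsx : 0 < sqrt x) by (apply sqrt_lt_R0; lra).
  assert (Esx : sqrt x * sqrt x = x) by (apply sqrt_sqrt; lra).
  assert (E1 : u1 d x = sqrt x / sqrt (INR d + 1)) by (unfold u1; apply sqrt_div_alt; lra).
  assert (E2 : u2 d x = sqrt x / sqrt (INR d)) by (unfold u2; apply sqrt_div_alt; lra).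
  assert (S1 : 0 < sqrt (INR d + 1)) by (apply sqrt_lt_R0; lra).
  assert (S2 : 0 < sqrt (INR d)) by (apply sqrt_lt_R0; lra).
  rewrite E1, E2.
  rewrite (AA_val d x (sqrt x) (sqrt (INR d + 1))) by (auto; apply sqrt_sqrt; lra).
  assert (K := AB2_val d x (sqrt x) (sqrt (INR d)) Hsx S2 Esx ltac:(apply sqrt_sqrt; lra)).
  unfold fconst.
  destruct le_dec as [D2|D2].
  - assert (2 <= INR d) by (apply (le_INR 2); lia).
    assert (E3 : u3 d x = sqrt x / sqrt (INR d - 1)) by (unfold u3; apply sqrt_div_alt; lra).
    assert (S3 : 0 < sqrt (INR d - 1)) by (apply sqrt_lt_R0; lra).
    rewrite E3.
    rewrite (BB_val d x (sqrt x) (sqrt (INR d - 1))) by (auto; apply sqrt_sqrt; lra).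
    field_simplify. field_simplify in K. lra.
  - assert (d = 1%nat) by lia. subst d. simpl INR in *.
    replace (1 - 1) with 0 by ring. rewrite sqrt_0.
    field_simplify. field_simplify in K. lra.
Qed.

Theorem proposition6 :
  exists C : R, forall (d : nat) (x : R),
    (1 <= d)%nat -> 0 < x ->
    Rabs (W d x - fconst d * sqrt x) <= C * INR d.
Proof.
  exists 14. intros d x Hd Hx.
  pose proof (INRd1 d Hd) as HD.
  set (M := Z.to_nat (floorR x)).
  assert (HW : W d x = sum_f_R0 (fun k => W_term d x (S k)) M) by reflexivity.
  assert (HM : x - 1 < INR M).
  { pose proof (base_Int_part x) as [B1 B2].
    assert (-1 < Int_part x)%Z by (apply lt_IZR; lra).
    unfold M, floorR. rewrite INR_IZR_INZ, Z2Nat.id by lia. lra. }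
  set (y := INR M + 2).
  assert (Hy : x + 1 < y) by (unfold y; lra).
  pose proof (part1 d x M Hx) as P1.
  pose proof (part2 d x M Hd Hx) as P2. fold y in P2.
  pose proof (PP1_bound d x Hd Hx) as P3.
  rewrite <- (Pinf_val d x Hd Hx).
  assert (P4 : Rabs (PP d x y - (AA d x (u2 d x) - AA d x (u1 d x)
       + (if le_dec 2 d then BB d x (u3 d x) else 0) - BB d x (u2 d x))) <= 2).
  { pose proof (pos_u1 d x Hd Hx). pose proof (u12 d x Hd Hx).
    assert (Hsx : sqrt x < x + 1).
    { assert (0 <= sqrt x) by apply sqrt_pos. assert (sqrt x * sqrt x = x) by (apply sqrt_sqrt; lra). nra. }
    assert (Hu2 : u2 d x <= sqrt x).
    { unfold u2. apply sqrt_le_1_alt. unfold Rdiv. 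
      assert (x * / INR d <= x * 1) by (apply Rmult_le_compat_l; [lra| rewrite <- Rinv_1; apply Rinv_le_contravar; lra]). lra. }
    destruct le_dec as [D2|D2].
    - assert (2 <= INR d) by (apply (le_INR 2); lia).
      assert (Hu3 : u3 d x <= sqrt x).
      { unfold u3. apply sqrt_le_1_alt. unfold Rdiv.
        assert (x * / (INR d - 1) <= x * 1) by (apply Rmult_le_compat_l; [lra| rewrite <- Rinv_1; apply Rinv_le_contravar; lra]). lra. }
      rewrite (PP_R3 d x Hd Hx y D2) by lra. rewrite Rminus_diag, Rabs_R0. lra.
    - rewrite (PP_R2 d x Hd Hx y) by (lra || (intros; lia)).
      assert (d = 1%nat) by lia. subst d.
      replace (AA 1 x (u2 1 x) - AA 1 x (u1 1 x) + BB 1 x y - BB 1 x (u2 1 x) -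
               (AA 1 x (u2 1 x) - AA 1 x (u1 1 x) + 0 - BB 1 x (u2 1 x))) with (BB 1 x y) by ring.
      apply BB1_bound; lra. }
  rewrite HW.
  set (Sw := sum_f_R0 (fun k => W_term d x (S k)) M) in *.
  set (Sh := sum_f_R0 (fun k => hh (tt d x (S k))) M) in *.
  set (Pi := AA d x (u2 d x) - AA d x (u1 d x) + (if le_dec 2 d then BB d x (u3 d x) else 0) - BB d x (u2 d x)) in *.
  assert (Rabs (Sw - Pi) <= 14).
  { replace (Sw - Pi) with ((Sw - Sh) + (Sh - (PP d x y - PP d x 1)) + (PP d x y - Pi) - PP d x 1) by ring.
    unfold Rabs in *; repeat destruct Rcase_abs; lra. }
  nra.
Qed.
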